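(* Let $E|k$ be a finite extension of non-Archimedean local fields with residue degree $f$ and residue field $\kappa$ of $k$, and let $e'$ be a positive integer dividing $e(E|k)$ and coprime to $\mathrm{char}(\kappa)\sum_{i=0}^{f-1}(\#\kappa)^i$. Then there are a uniformizer $\pi_k$ of $k$ and $\alpha\in E$ with $\alpha^{e'}=\pi_k$.
   Context: $e(E|k)$ denotes the ramification index of $E|k$, $\mathrm{char}(\kappa)$ the characteristic of the residue field of $k$. *)

(* Defs.v *)
(* Non-Archimedean local fields are modelled as fields with a
   normalized discrete valuation, complete, with finite residue field. *)
From HB Require Import structures.
From mathcomp Require Import all_boot all_order all_algebra all_field.
Set Implicit Arguments. Unset Strict Implicit. Unset Printing Implicit Defensive.
Import Order.TTheory GRing.Theory Num.Theory.
Local Open Scope ring_scope.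

Section Valuations.
Variable K : fieldType.
Implicit Types (v : K -> int).

(* v is a normalized discrete valuation K^* ->> Z (values at 0 are irrelevant) *)
Definition is_dval v : Prop :=
  [/\ (forall x y : K, x != 0 -> y != 0 -> v (x * y) = v x + v y),
      (forall x y : K, x != 0 -> y != 0 -> x + y != 0 ->
          Num.min (v x) (v y) <= v (x + y))
    & (exists x : K, x != 0 /\ v x = 1)].

(* x lies in the fractional ideal pi^n O, i.e. x = 0 or v x >= n *)
Definition vge v (n : int) (x : K) : bool := (x == 0) || (n <= v x).

Definition vcomplete v : Prop :=
  forall u : nat -> K,
    (forall n : int, exists N : nat, forall i j : nat,
        (N <= i)%N -> (N <= j)%N -> vge v n (u i - u j)) ->
    exists l : K, forall n : int, exists N : nat, forall i : nat,
        (N <= i)%N -> vge v n (u i - l).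

(* s is a complete system of distinct representatives of the residue field O/m *)
Definition residue_system v (s : seq K) : Prop :=
  [/\ all (vge v 0) s,
      (forall i j : nat, (i < size s)%N -> (j < size s)%N -> i != j ->
          ~~ vge v 1 (s`_i - s`_j))
    & (forall x : K, vge v 0 x -> exists2 y, y \in s & vge v 1 (x - y))].

Definition residue_card v (q : nat) : Prop :=
  exists s : seq K, residue_system v s /\ size s = q.

Definition local_field v : Prop :=
  [/\ is_dval v, vcomplete v & exists q : nat, residue_card v q].

Definition residue_char v (p : nat) : Prop := prime p /\ vge v 1 (p%:R).

End Valuations.

(* Main.v *)
Require Import Defs.
From HB Require Import structures.
From mathcomp Require Import all_boot all_order all_algebra all_field.
From mathcomp Require Import zify ring lra.
Set Implicit Arguments. Unset Strict Implicit. Unset Printing Implicit Defensive.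
Import Order.TTheory GRing.Theory Num.Theory.
Local Open Scope ring_scope.

Lemma iA (j : nat) : (j.+2%:Z) = 1 + j.+1%:Z :> int. Proof. lia. Qed.
Lemma iB (j : nat) : (j.+2%:Z) <= j.+1%:Z + j.+1%:Z :> int. Proof. lia. Qed.
Lemma iC (N k : nat) : (N.+1%:Z) <= (N + k)%N.+1%:Z :> int. Proof. lia. Qed.
Lemma iD (m : int) : m <= (`|m|%N).+1%:Z. Proof. lia. Qed.
Lemma iE (m : int) : 0 <= (`|m|%N).+1%:Z :> int. Proof. lia. Qed.
Lemma iF (m : int) (i : nat) : (`|m| <= i)%N -> m <= i.+1%:Z. Proof. lia. Qed.

Section Val.
Variable K : fieldType.
Variable v : K -> int.
Hypothesis hv : is_dval v.

Lemma vM x y : x != 0 -> y != 0 -> v (x * y) = v x + v y.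
Proof. by move: hv => [h1 h2 _]; auto. Qed.

Lemma vD x y : x != 0 -> y != 0 -> x + y != 0 -> Num.min (v x) (v y) <= v (x + y).
Proof. by move: hv => [h1 h2 _]; auto. Qed.

Lemma v1 : v 1 = 0.
Proof.
have h : v 1 = v 1 + v 1 by rewrite -{1}(mulr1 1) vM // oner_neq0.
lia.
Qed.

Lemma vN1 : v (-1) = 0.
Proof.
have h : v 1 = v (-1) + v (-1) by rewrite -vM ?oppr_eq0 ?oner_neq0 // mulrNN mulr1.
rewrite v1 in h; lia.
Qed.

Lemma vN x : v (- x) = v x.
Proof.
have [->|x0] := eqVneq x 0; first by rewrite oppr0.
by rewrite -mulN1r vM ?vN1 ?add0r // oppr_eq0 oner_eq0.
Qed.

Lemma vV x : x != 0 -> v (x^-1) = - v x.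
Proof.
move=> x0; have h : v 1 = v x + v (x^-1) by rewrite -(mulfV x0) vM // invr_neq0.
rewrite v1 in h; lia.
Qed.

Lemma vX x n : x != 0 -> v (x ^+ n) = (n%:Z * v x).
Proof.
move=> x0; elim: n => [|n IH]; first by rewrite expr0 v1 mul0r.
rewrite exprS vM ?expf_neq0 // IH. lia.
Qed.

Local Notation vge := (vge v).

Lemma vge0 n : vge n 0. Proof. by rewrite /vge eqxx. Qed.

Lemma vgeE n x : x != 0 -> vge n x = (n <= v x).
Proof. by move=> x0; rewrite /vge (negPf x0). Qed.

Lemma vge_le m n x : m <= n -> vge n x -> vge m x.
Proof. by rewrite /vge => mn /orP[->//|h]; rewrite (le_trans mn h) orbT. Qed.

Lemma vgeN n x : vge n (- x) = vge n x.
Proof. by rewrite /vge oppr_eq0 vN. Qed.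

Lemma vgeD n x y : vge n x -> vge n y -> vge n (x + y).
Proof.
have [->|x0] := eqVneq x 0; first by rewrite add0r.
have [->|y0] := eqVneq y 0; first by rewrite addr0.
have [->|s0] := eqVneq (x + y) 0; first by rewrite vge0.
rewrite !vgeE // => hx hy; apply: le_trans (vD x0 y0 s0).
by rewrite le_min hx hy.
Qed.

Lemma vgeB n x y : vge n x -> vge n y -> vge n (x - y).
Proof. by move=> hx hy; apply: vgeD; rewrite ?vgeN. Qed.

Lemma vgeM m n x y : vge m x -> vge n y -> vge (m + n) (x * y).
Proof.
have [->|x0] := eqVneq x 0; first by move=> *; rewrite mul0r vge0.
have [->|y0] := eqVneq y 0; first by move=> *; rewrite mulr0 vge0.
rewrite (vgeE _ x0) (vgeE _ y0) (vgeE _ (mulf_neq0 x0 y0)) vM // => hx hy.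
exact: lerD hx hy.
Qed.

Lemma vgeM0l n x y : vge 0 x -> vge n y -> vge n (x * y).
Proof. by move=> hx hy; have := vgeM hx hy; rewrite add0r. Qed.

Lemma vgeM0r n x y : vge n x -> vge 0 y -> vge n (x * y).
Proof. by move=> hx hy; have := vgeM hx hy; rewrite addr0. Qed.

Lemma vge01 : vge 0 1. Proof. by rewrite vgeE ?oner_eq0 // v1. Qed.

Lemma vgeX x n : vge 0 x -> vge 0 (x ^+ n).
Proof.
move=> hx; elim: n => [|n IH]; first by rewrite expr0 vge01.
by rewrite exprS; apply: vgeM0l.
Qed.

Lemma vge_nat n : vge 0 (n%:R).
Proof.
elim: n => [|n IH]; first by rewrite vge0.
by rewrite mulrS; apply: vgeD => //; apply: vge01.
Qed.

Lemma vge_all x : (forall n, vge n x) -> x = 0.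
Proof.
move=> h; apply/eqP; have := h (v x + 1); rewrite /vge => /orP[//|].
rewrite -subr_ge0 opprD addrA subrr sub0r oppr_ge0 ler10 //.
Qed.

Definition unitv x := vge 0 x && ~~ vge 1 x.

Lemma unitvP x : unitv x -> x != 0 /\ v x = 0.
Proof.
case/andP; have [->|x0] := eqVneq x 0; first by move=> _; rewrite vge0.
rewrite !vgeE // => h0 h1; split => //; lia.
Qed.

Lemma unitvV x : unitv x -> unitv (x^-1).
Proof.
move=> /unitvP [x0 vx]; rewrite /unitv !vgeE ?invr_neq0 // vV // vx; lia.
Qed.

Lemma unitvM x y : unitv x -> unitv y -> unitv (x * y).
Proof.
move=> /unitvP [x0 vx] /unitvP [y0 vy].
rewrite /unitv !vgeE ?mulf_neq0 // vM // vx vy; lia.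
Qed.

Lemma unitvX x n : unitv x -> unitv (x ^+ n).
Proof.
move=> ux; elim: n => [|n IH]; first by rewrite expr0 /unitv vge01 vgeE ?oner_eq0 ?v1.
by rewrite exprS unitvM.
Qed.

Lemma unitv_cong x y : unitv x -> vge 1 (x - y) -> unitv y.
Proof.
move=> ux hxy; have hx0 : vge 0 x by case/andP: ux.
have hy : y = x - (x - y) by rewrite opprB addrC subrK.
apply/andP; split.
  by rewrite hy; apply: vgeB => //; apply: vge_le hxy.
apply/negP => hy1; case/andP: ux => _ /negP; apply.
have -> : x = (x - y) + y by rewrite subrK.
exact: vgeD.
Qed.

Lemma unitv_mulV x : unitv x -> x * x^-1 = 1.
Proof. by case/unitvP => x0 _; rewrite mulfV. Qed.

Lemma pow_diff a b n : vge 0 a -> vge 0 b ->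
  exists S, vge 0 S /\ a ^+ n - b ^+ n = (a - b) * S.
Proof.
move=> ha hb; elim: n => [|n [S [hS e]]].
  by exists 0; rewrite subrr mulr0 vge0.
exists (a * S + b ^+ n); split.
  by apply: vgeD; [apply: vgeM0l | apply: vgeX].
have -> : a ^+ n.+1 - b ^+ n.+1 = a * (a ^+ n - b ^+ n) + (a - b) * b ^+ n
  by rewrite !exprS; ring.
by rewrite e; ring.
Qed.

Lemma pow_exp2 y t n : vge 0 y -> vge 0 t ->
  exists r, vge 0 r /\
   (y - t) ^+ n.+1 = y ^+ n.+1 - n.+1%:R * y ^+ n * t + t ^+ 2 * r.
Proof.
move=> hy ht; elim: n => [|n [r [hr e]]].
  by exists 0; rewrite vge0 expr1 expr0 mulr0 addr0 mulr1 mul1r.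
exists (y * r + n.+1%:R * y ^+ n - t * r); split.
  apply: vgeB; last exact: vgeM0l.
  apply: vgeD; [exact: vgeM0l | apply: vgeM0l; [exact: vge_nat| exact: vgeX]].
rewrite exprS e [in RHS]mulrS !exprS.
move: (y ^+ n) (n.+1%:R : K) => Y k; ring.
Qed.

Hypothesis hc : vcomplete v.

Lemma hensel n c x0 : unitv (n.+1%:R) -> unitv c -> vge 0 x0 ->
  vge 1 (x0 ^+ n.+1 - c) -> exists x, x ^+ n.+1 = c.
Proof.
move=> uN uc hx0 h0.
have ux0 : unitv x0.
  apply/andP; split => //; apply/negP => hx1.
  case/andP: uc => _ /negP; apply.
  have -> : c = x0 ^+ n.+1 - (x0 ^+ n.+1 - c) by rewrite opprB addrC subrK.
  apply: vgeB => //; rewrite exprS; exact: vgeM0r (vgeX _ _).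
pose D := n.+1%:R * x0 ^+ n.
have hD : D = n.+1%:R * x0 ^+ n by [].
clearbody D.
have uD : unitv D by rewrite hD; apply: unitvM => //; apply: unitvX.
have [D0 _] := unitvP uD.
have uDi := unitvV uD.
have hDi : vge 0 D^-1 by case/andP: uDi.
pose y := fix y j := if j is j'.+1 then y j' - (y j' ^+ n.+1 - c) / D else x0.
have inv : forall j : nat, [/\ vge 0 (y j), vge 1 (y j - x0) &
                          vge (j.+1%:Z) (y j ^+ n.+1 - c)].
  elim => [|j [h1 h2 h3]]; first by rewrite /= subrr vge0.
  have -> : y j.+1 = y j - (y j ^+ n.+1 - c) / D by [].
  move: (y j) h1 h2 h3 => Y h1 h2 h3.
  pose t := (Y ^+ n.+1 - c) / D.
  have -> : Y - (Y ^+ n.+1 - c) / D = Y - t by [].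
  have ht : vge (j.+1%:Z) t by apply: vgeM0r.
  have eD : Y ^+ n.+1 - c = D * t by rewrite /t mulrCA mulfV ?mulr1.
  clearbody t.
  have ht0 : vge 0 t by apply: vge_le ht.
  have ht1 : vge 1 t by apply: vge_le ht.
  split.
  - exact: vgeB.
  - have -> : Y - t - x0 = (Y - x0) - t by ring.
    exact: vgeB.
  have [r [hr e]] := pow_exp2 n h1 ht0.
  have [S [hS eS]] := pow_diff n hx0 h1.
  have -> : (Y - t) ^+ n.+1 - c =
            n.+1%:R * t * ((x0 - Y) * S) + t * t * r.
    rewrite e -eS.
    have -> : Y ^+ n.+1 = D * t + c by rewrite -eD subrK.
    rewrite hD expr2. move: (Y ^+ n) (x0 ^+ n) (n.+1%:R : K) => a b k. ring.
  apply: vgeD.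
    rewrite mulrC; rewrite iA.
    apply: vgeM; last exact: vgeM0l (vge_nat _) ht.
    apply: vgeM0r hS. by rewrite -opprB vgeN.
  apply: vgeM0r hr; exact: vge_le (iB j) (vgeM ht ht).
have step : forall j : nat, vge (j.+1%:Z) (y j.+1 - y j).
  move=> j; have [h1 _ h3] := inv j.
  have -> : y j.+1 - y j = - ((y j ^+ n.+1 - c) / D).
    have -> : y j.+1 = y j - (y j ^+ n.+1 - c) / D by [].
    move: (y j) => Y; ring.
  by rewrite vgeN; apply: vgeM0r.
clearbody y.
have far : forall N k : nat, vge (N.+1%:Z) (y (N + k)%N - y N).
  move=> N; elim => [|k IH]; first by rewrite addn0 subrr vge0.
  have -> : y (N + k.+1)%N - y N = (y (N + k).+1 - y (N + k)%N) + (y (N + k)%N - y N).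
    by rewrite addnS; ring.
  apply: vgeD => //; exact: vge_le (iC N k) (step _).
have cauchy : forall m : int, exists N : nat, forall i j : nat,
    (N <= i)%N -> (N <= j)%N -> vge m (y i - y j).
  move=> m; exists `|m|%N => i j hi hj.
  have -> : y i - y j = (y (addn (absz m) (subn i (absz m))) - y (absz m))
                      - (y (addn (absz m) (subn j (absz m))) - y (absz m)).
    by rewrite !subnKC //; ring.
  by apply: vgeB; apply: vge_le (far _ _); apply: iD.
have [l hl] := hc cauchy.
exists l; apply/eqP; rewrite -subr_eq0; apply/eqP; apply: vge_all => m.
have [N hN] := hl (`|m|.+1%:Z).
set i := maxn N `|m|.
have hyl := hN i (leq_maxl _ _).
have [h1 _ h3] := inv i.
have hl0 : vge 0 l.
  have -> : l = y i - (y i - l) by ring.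
  by apply: vgeB => //; apply: vge_le hyl; apply: iE.
have [S [hS eS]] := pow_diff n.+1 h1 hl0.
have -> : l ^+ n.+1 - c = - (y i ^+ n.+1 - l ^+ n.+1) + (y i ^+ n.+1 - c) by ring.
apply: vgeD.
  rewrite vgeN eS; apply: vgeM0r hS; apply: vge_le hyl; apply: iD.
apply: vge_le h3; apply: iF; exact: leq_maxr.
Qed.

End Val.


Section Residue.
Variable K : fieldType.
Variable v : K -> int.
Variable s : seq K.
Hypothesis hv : is_dval v.
Hypothesis hs : residue_system v s.
Local Notation vge := (vge v).
Local Notation vgeN := (vgeN hv).
Local Notation vgeD := (vgeD hv).
Local Notation vgeB := (vgeB hv).
Local Notation vgeM := (vgeM hv).
Local Notation vgeM0l := (vgeM0l hv).
Local Notation vgeM0r := (vgeM0r hv).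
Local Notation vge01 := (vge01 hv).
Local Notation vgeX := (vgeX hv).

Definition cong (x y : K) := vge 1 (x - y).
Definition rep (x : K) : K := nth 0 s (find (cong x) s).

Lemma congxx x : cong x x. Proof. by rewrite /cong subrr vge0. Qed.
Lemma congC x y : cong x y -> cong y x.
Proof. by rewrite /cong -opprB vgeN. Qed.
Lemma congT x y z : cong x y -> cong y z -> cong x z.
Proof.
rewrite /cong => h1 h2; have -> : x - z = (x - y) + (y - z) by ring.
exact: vgeD.
Qed.
Lemma congD x y x' y' : cong x x' -> cong y y' -> cong (x + y) (x' + y').
Proof.
rewrite /cong => h1 h2; have -> : x + y - (x' + y') = (x - x') + (y - y') by ring.
exact: vgeD.
Qed.
Lemma congN x x' : cong x x' -> cong (- x) (- x').
Proof. by rewrite /cong -opprD vgeN. Qed.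
Lemma congM x y x' y' : vge 0 x -> vge 0 y' -> cong x x' -> cong y y' ->
  cong (x * y) (x' * y').
Proof.
rewrite /cong => hx hy' h1 h2.
have -> : x * y - x' * y' = x * (y - y') + (x - x') * y' by ring.
apply: vgeD; [exact: vgeM0l | exact: vgeM0r].
Qed.

Lemma s_int y : y \in s -> vge 0 y.
Proof. by case: hs => /allP h _ _; apply: h. Qed.

Lemma s_eq a b : a \in s -> b \in s -> cong a b -> a = b.
Proof.
move=> ha hb hab; case: hs => _ hd _.
have ia := index_mem a s; have ib := index_mem b s.
rewrite ha in ia; rewrite hb in ib.
have [eij|nij] := eqVneq (index a s) (index b s).
  by rewrite -(nth_index 0 ha) -(nth_index 0 hb) eij.
by have := hd _ _ ia ib nij; rewrite !nth_index //; rewrite /cong in hab; rewrite hab.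
Qed.

Lemma rep_spec x : vge 0 x -> rep x \in s /\ cong x (rep x).
Proof.
move=> hx; case: hs => _ _ /(_ x hx) [y ys hy].
have hh : has (cong x) s by apply/hasP; exists y.
split; first by rewrite /rep mem_nth // -has_find.
exact: nth_find.
Qed.

Definition F_ (h1 : is_dval v) (h2 : residue_system v s) : Type := seq_sub s.
Local Notation F := (F_ hv hs).
HB.instance Definition _ := Finite.copy F (seq_sub s).

Lemma rep0_in : rep 0 \in s. Proof. by case: (rep_spec (vge0 v 0)). Qed.
Definition d0 : F := SeqSub rep0_in.

Definition red (x : K) : F := insubd d0 (rep x).

Lemma valO (a : F) : vge 0 (val a).
Proof. apply: s_int; exact: ssvalP. Qed.

Lemma val_red x : vge 0 x -> val (red x) = rep x.
Proof. by move=> hx; rewrite /red insubdK //; case: (rep_spec hx). Qed.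

Lemma cong_red x : vge 0 x -> cong (val (red x)) x.
Proof. by move=> hx; rewrite val_red //; apply: congC; case: (rep_spec hx). Qed.

Lemma red_eq x y : vge 0 x -> vge 0 y -> cong x y -> red x = red y.
Proof.
move=> hx hy hxy; apply: val_inj; rewrite !val_red //.
have [i1 c1] := rep_spec hx; have [i2 c2] := rep_spec hy.
apply: s_eq => //; apply: congT (congC c1) (congT hxy c2).
Qed.

Lemma red_val (a : F) : red (val a) = a.
Proof.
apply: val_inj; rewrite val_red ?valO //.
have [i1 c1] := rep_spec (valO a).
by apply: s_eq => //; [exact: ssvalP | exact: congC].
Qed.

Lemma red_inj x y : vge 0 x -> vge 0 y -> red x = red y -> cong x y.
Proof.
move=> hx hy e; apply: congT (congC (cong_red hx)) _.
by rewrite e; apply: cong_red.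
Qed.

Definition addF (a b : F) := red (val a + val b).
Definition oppF (a : F) := red (- val a).
Definition mulF (a b : F) := red (val a * val b).
Definition invF (a : F) := red (if cong (val a) 0 then 0 else (val a)^-1).

Ltac vint := repeat first [ exact: valO | exact: vge01 | exact: vge0
  | apply: vgeD | apply: vgeB | apply: vgeM0l | rewrite vgeN ].

Lemma addFA : associative addF.
Proof.
move=> a b c; apply: red_eq; try by vint.
apply: congT (congD (congxx _) (cong_red _)) _; first by vint.
rewrite addrA; apply: congC; apply: congD (cong_red _) (congxx _); by vint.
Qed.

Lemma addFC : commutative addF.
Proof. by move=> a b; rewrite /addF addrC. Qed.

Lemma add0F : left_id (red 0) addF.
Proof.
move=> a; rewrite /addF -[RHS]red_val; apply: red_eq; try by vint.
by rewrite -[X in cong _ X]add0r; apply: congD (cong_red _) (congxx _); vint.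
Qed.

Lemma addNF : left_inverse (red 0) oppF addF.
Proof.
move=> a; rewrite /addF /oppF; apply: red_eq; try by vint.
rewrite -(addNr (val a)); apply: congD (cong_red _) (congxx _); by vint.
Qed.

HB.instance Definition _ := GRing.isZmodule.Build F addFA addFC add0F addNF.

Lemma mulFA : associative mulF.
Proof.
move=> a b c; apply: red_eq; try by vint.
apply: congT (congM _ _ (congxx _) (cong_red _)) _; try by vint.
rewrite mulrA; apply: congC; apply: congM (cong_red _) (congxx _); by vint.
Qed.

Lemma mulFC : commutative mulF.
Proof. by move=> a b; rewrite /mulF mulrC. Qed.

Lemma mul1F : left_id (red 1) mulF.
Proof.
move=> a; rewrite /mulF -[RHS]red_val; apply: red_eq; try by vint.
by rewrite -[X in cong _ X]mul1r; apply: congM (cong_red _) (congxx _); vint.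
Qed.

Lemma mulFDl : left_distributive mulF addF.
Proof.
move=> a b c; rewrite /mulF /addF /=; apply: red_eq; try by vint.
apply: congT (congM _ _ (cong_red _) (congxx _)) _; try by vint.
rewrite mulrDl; apply: congC; apply: congD (cong_red _) (cong_red _); by vint.
Qed.

Lemma v1_cong0 : ~~ cong 1 0.
Proof.
rewrite /cong subr0 vgeE ?oner_eq0 // (v1 hv); by [].
Qed.

Lemma oneF_neq0 : red 1 != red 0.
Proof.
apply/eqP => /red_inj h; move/negP: v1_cong0; apply; apply: h; by vint.
Qed.

HB.instance Definition _ := GRing.Zmodule_isComNzRing.Build F mulFA mulFC mul1F mulFDl oneF_neq0.

Lemma zeroFE : (0 : F) = red 0. Proof. by []. Qed.
Lemma oneFE : (1 : F) = red 1. Proof. by []. Qed.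
Lemma addFE (a b : F) : a + b = red (val a + val b). Proof. by []. Qed.
Lemma mulFE (a b : F) : a * b = red (val a * val b). Proof. by []. Qed.

Lemma mulVF (a : F) : a != 0 -> invF a * a = 1.
Proof.
move=> a0; rewrite mulFE oneFE /invF.
have nc : ~~ cong (val a) 0.
  apply/negP => h; move/eqP: a0; apply; rewrite -[a]red_val zeroFE.
  by apply: red_eq => //; vint.
rewrite (negbTE nc).
have ua : unitv v (val a) by apply/andP; split; [exact: valO | by rewrite /cong subr0 in nc].
have hi : vge 0 (val a)^-1 by case/andP: (unitvV hv ua).
apply: red_eq; try by vint.
apply: congT (congM _ _ (cong_red _) (congxx _)) _; try by vint.
rewrite mulVf; first exact: congxx.
by case: (unitvP ua).
Qed.

Lemma invF0 : invF 0 = 0.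
Proof.
rewrite /invF zeroFE val_red ?vge0 //.
have [_ c] := rep_spec (vge0 v 0).
by rewrite (congC c).
Qed.

HB.instance Definition _ := GRing.ComNzRing_isField.Build F mulVF invF0.

Lemma cardF : #|{: F}| = size s.
Proof.
rewrite /F_ card_seq_sub //.
case: hs => _ hd _; apply/(uniqP 0) => i j; rewrite !inE => hi hj e.
apply/eqP; apply/negP => /negP nij; move: (hd i j hi hj nij).
by rewrite e /cong subrr vge0.
Qed.

Lemma redD x y : vge 0 x -> vge 0 y -> red (x + y) = red x + red y.
Proof.
move=> hx hy; rewrite addFE; apply: red_eq; try by vint.
by apply: congC; apply: congD; apply: cong_red.
Qed.

Lemma redM x y : vge 0 x -> vge 0 y -> red (x * y) = red x * red y.
Proof.
move=> hx hy; rewrite mulFE; apply: red_eq; try by vint.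
by apply: congC; apply: congM; [exact: valO | exact: hy | exact: cong_red | exact: cong_red].
Qed.

Lemma red1 : red 1 = 1. Proof. by []. Qed.
Lemma red0 : red 0 = 0. Proof. by []. Qed.

Lemma redX x n : vge 0 x -> red (x ^+ n) = red x ^+ n.
Proof.
move=> hx; elim: n => [|n IH]; first by rewrite !expr0.
by rewrite !exprS redM ?IH //; apply: vgeX.
Qed.

Lemma red_eq0 x : vge 0 x -> (red x == 0) = cong x 0.
Proof.
move=> hx; apply/eqP/idP => [e|c]; last by rewrite -red0; apply: red_eq => //; vint.
by apply: red_inj => //; try by vint.
Qed.

End Residue.

Lemma fermat (G : finFieldType) (x : G) : x != 0 -> x ^+ #|G|.-1 = 1.
Proof.
move=> x0; have h := expf_card x.
rewrite -(ltn_predK (finNzRing_gt1 G)) exprS in h.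
by apply: (mulfI x0); rewrite h mulr1.
Qed.



Section Alg.
Variable (k : fieldType) (E : fieldExtType k).
Lemma algM (x y : k) : (x * y)%:A = x%:A * y%:A :> E. Proof. by rewrite -scalerA mulr_algl. Qed.
Lemma algX (x : k) n : (x ^+ n)%:A = x%:A ^+ n :> E. Proof. exact: (rmorphXn (in_alg E)). Qed.
Lemma algB (x y : k) : (x - y)%:A = x%:A - y%:A :> E. Proof. by rewrite scalerBl. Qed.
Lemma alg_eq0 (x : k) : (x%:A == 0 :> E) = (x == 0). Proof. by rewrite scaler_eq0 oner_eq0 orbF. Qed.
Lemma algn n : (n%:R : k)%:A = n%:R :> E. Proof. by rewrite scaler_nat. Qed.
Lemma algV (x : k) : (x^-1)%:A = (x%:A)^-1 :> E. Proof. exact: (fmorphV (in_alg E)). Qed.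
Lemma alg1 : (1 : k)%:A = 1 :> E. Proof. by rewrite scale1r. Qed.

Variable (vk : k -> int) (vE : E -> int) (e : nat).
Hypothesis he : (0 < e)%N.
Hypothesis hAE : forall x : k, x != 0 -> vE (x%:A) = (e%:Z * vk x).

Lemma tr0 x : vge vk 0 x -> vge vE 0 x%:A.
Proof.
have [->|x0] := eqVneq x 0; first by move=> _; rewrite scale0r vge0.
rewrite !vgeE ?alg_eq0 // hAE //; move: he; clear; move=> he h; lia.
Qed.

Lemma tr1 x : vge vk 1 x -> vge vE 1 x%:A.
Proof.
have [->|x0] := eqVneq x 0; first by move=> _; rewrite scale0r vge0.
rewrite !vgeE ?alg_eq0 // hAE //; move: he; clear; move=> he h; nia.
Qed.

Lemma tr1' x : vge vE 1 x%:A -> vge vk 1 x.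
Proof.
have [->|x0] := eqVneq x 0; first by move=> _; rewrite vge0.
rewrite !vgeE ?alg_eq0 // hAE //; move: he; clear; move=> he h; nia.
Qed.

Lemma tru x : unitv vk x -> unitv vE x%:A.
Proof.
case/andP => h0 h1; apply/andP; split; first exact: tr0.
by apply/negP => /tr1'; apply/negP.
Qed.

End Alg.


Unset Implicit Arguments.
Set Strict Implicit.

Theorem mainTheorem17 (k : fieldType) (E : fieldExtType k)
    (vk : k -> int) (vE : E -> int) (e f q p e' : nat) :
  local_field vk -> local_field vE ->
  (0 < e)%N ->
  (forall x : k, x != 0 -> vE (x%:A) = (e%:Z * vk x)) ->
  residue_card vk q -> residue_card vE (q ^ f)%N ->
  residue_char vk p ->
  (0 < e')%N -> (e' %| e)%N ->
  coprime e' (p * \sum_(i < f) q ^ i)%N ->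
  exists (pik : k) (alpha : E),
    [/\ pik != 0, vk pik = 1 & alpha ^+ e' = pik%:A].
Proof.
move=> [hvk hck _] [hvE hcE _] he hAE [sk [hsk csk]] [sE [hsE csE]] [pp hp] he'0 dive cop.
have [pik [pik0 vpik]] : exists x : k, x != 0 /\ vk x = 1 by case: hvk.
have [piE [piE0 vpiE]] : exists x : E, x != 0 /\ vE x = 1 by case: hvE.
have [e'1|e'1] := eqVneq e' 1%N.
  by exists pik, pik%:A; split; rewrite // e'1 expr1.
move: cop; set d := (\sum_(i < f) q ^ i)%N => cop.
have d0 : (0 < d)%N.
  rewrite lt0n; apply/negP => /eqP d0; rewrite d0 muln0 /coprime gcdn0 in cop.
  by rewrite cop in e'1.
move: cop; rewrite coprimeMr => /andP [cp cd].
have [km kn hB _] := egcdnP e' d0.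
rewrite coprime_sym in cd; rewrite (eqP cd) in hB.
have [km' kn' hB' _] := egcdnP p he'0.
rewrite (eqP cp) in hB'.
have ue'k : unitv vk (e'%:R : k).
  apply/andP; split; first exact: vge_nat.
  apply/negP => h.
  have h1 : vge vk 1 ((km' * e')%N%:R : k) by rewrite natrM; have := vgeM0l hvk (vge_nat hvk km') h.
  have h2 : vge vk 1 ((kn' * p)%N%:R : k) by rewrite natrM; have := vgeM0l hvk (vge_nat hvk kn') hp.
  have : vge vk 1 (1 : k).
    have -> : (1 : k) = (km' * e')%N%:R - (kn' * p)%N%:R by rewrite hB' natrD addrC addKr.
    exact: vgeB.
  by rewrite vgeE ?oner_eq0 // (v1 hvk).
have ue'E : unitv vE (e'%:R : E) by rewrite -(algn E); apply: (tru he hAE).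
set m := (e %/ e')%N.
have em : e = (m * e')%N by rewrite divnK.
set g := piE ^+ m.
have g0 : g != 0 by rewrite expf_neq0.
have ge0 : g ^+ e' != 0 by rewrite expf_neq0.
have vg : vE (g ^+ e') = e%:Z by rewrite (vX hvE) // (vX hvE) // vpiE em; lia.
set u := pik%:A / g ^+ e'.
have pikA0 : pik%:A != 0 :> E by rewrite alg_eq0.
have u0 : u != 0 by rewrite mulf_neq0 ?invr_eq0.
have vu : vE u = 0 by rewrite /u (vM hvE) ?invr_eq0 // (vV hvE) // vg hAE // vpik; lia.
have ue : unitv vE u by rewrite /unitv !vgeE // vu.
have hu0 : vge vE 0 u by case/andP: ue.
pose FE := F_ hvE hsE.
pose Fk := F_ hvk hsk.
have cFk : #|{: Fk}| = q by rewrite cardF.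
have cFE : #|{: FE}| = (q ^ f)%N by rewrite cardF.
have q1 : (1 < q)%N by rewrite -cFk; exact: finNzRing_gt1.
set ub := red hvE hsE u.
have ub0 : ub != 0.
  by rewrite /ub red_eq0 // /cong subr0; case/andP: ue.
have fermE : (ub ^+ d) ^+ q.-1 = 1.
  by rewrite -exprM mulnC -predn_exp -cFE; apply: fermat.
pose phi (a : Fk) : FE := red hvE hsE ((val a)%:A).
have intA : forall a : Fk, vge vE 0 ((val a)%:A) by move=> a; apply: (tr0 he hAE); apply: valO.
set rs := map phi (enum [pred a : Fk | a != 0]).
have srs : size rs = q.-1 by rewrite size_map -cardE cardC1 cFk.
have urs : uniq rs.
  rewrite map_inj_in_uniq ?enum_uniq // => a b _ _ hab.
  have c1 := red_inj (intA a) (intA b) hab.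
  rewrite -[a]red_val -[b]red_val; apply: red_eq; try exact: valO.
  by apply: (tr1' he hAE); rewrite algB.
pose P : {poly FE} := 'X^(q.-1) - 1.
have rootPh : forall a : Fk, a != 0 -> root P (phi a).
  move=> a a0; rewrite /P rootE !hornerE subr_eq0; apply/eqP.
  have fa := fermat a0; rewrite cFk in fa.
  rewrite /phi -(redX hvE hsE) // -algX -(red1 hvE hsE).
  apply: red_eq; first by apply: (tr0 he hAE); apply: (vgeX hvk); apply: valO.
    exact: (vge01 hvE).
  rewrite /cong.
  have -> : (val a ^+ q.-1)%:A - 1 = (val a ^+ q.-1 - 1)%:A :> E by rewrite algB alg1.
  apply: (tr1 he hAE).
  have : red hvk hsk (val a ^+ q.-1) = red hvk hsk 1.
    by rewrite (redX hvk hsk) ?valO // red_val fa red1.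
  move=> eq1; exact: red_inj (vgeX hvk _ (valO a)) (vge01 hvk) eq1.
have rz : root P (ub ^+ d) by rewrite /P rootE !hornerE fermE subrr.
have hq1 : (0 < q.-1)%N by rewrite -subn1 subn_gt0.
have zin : ub ^+ d \in rs.
  case: (boolP (ub ^+ d \in rs)) => // nz; exfalso.
  have P0 : P != 0 by rewrite -size_poly_eq0 /P size_XnsubC.
  have allr : all (root P) (ub ^+ d :: rs).
    apply/allP => y; rewrite inE => /orP [/eqP -> //|].
    by move=> /mapP [b]; rewrite mem_enum inE => b0 ->; exact: rootPh b b0.
  have := max_poly_roots P0 allr; rewrite /= nz urs srs /P size_XnsubC // ltnn.
  by move/(_ isT).
move: zin => /mapP [a]; rewrite mem_enum inE => a0 ea.
set w0 := val a.
have uw0 : unitv vk w0.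
  apply/andP; split; first exact: valO.
  apply/negP => h; move/eqP: a0; apply; rewrite -[a]red_val -(red0 hvk hsk).
  by apply: red_eq; [exact: valO | exact: vge0 | rewrite /cong subr0].
set w := w0^-1 ^+ km.
have uw : unitv vk w by apply: (unitvX hvk); apply: (unitvV hvk).
set x := u^-1 ^+ kn.
have uxi : unitv vE u^-1 by apply: (unitvV hvE).
have hx : vge vE 0 x by apply: (vgeX hvE); case/andP: uxi.
have uwA : unitv vE (w%:A) by apply: (tru he hAE).
have uc : unitv vE (u * w%:A) by apply: (unitvM hvE).
have redinv : forall y : E, unitv vE y -> red hvE hsE (y^-1) = (red hvE hsE y)^-1.
  move=> y uy; have [y0 _] := unitvP uy.
  have hy : vge vE 0 y by case/andP: uy.
  have hyi : vge vE 0 y^-1 by case/andP: (unitvV hvE uy).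
  have hr0 : red hvE hsE y != 0 by rewrite red_eq0 // /cong subr0; case/andP: uy.
  have h1 : red hvE hsE (y^-1) * red hvE hsE y = 1.
    by rewrite -(redM hvE hsE) // mulVf // red1.
  by rewrite -[LHS]mulr1 -(mulfV hr0) mulrA h1 mul1r.
have hui : vge vE 0 u^-1 by case/andP: uxi.
have uw0A : unitv vE (w0%:A) by apply: (tru he hAE).
have uw0Ai : unitv vE (w0%:A)^-1 by apply: (unitvV hvE).
have hw0Ai : vge vE 0 (w0%:A)^-1 by case/andP: uw0Ai.
have hwA : vge vE 0 (w%:A) by case/andP: uwA.
have hc0 : vge vE 0 (u * w%:A) by case/andP: uc.
have h1 : red hvE hsE (x ^+ e') = ub^-1 ^+ (kn * e').
  rewrite (redX hvE hsE) // (redX hvE hsE) // redinv //.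
  by rewrite -exprM.
have h2 : red hvE hsE (u * w%:A) = ub * ((phi a)^-1) ^+ km.
  rewrite (redM hvE hsE) //; congr (_ * _).
  rewrite /w algX algV (redX hvE hsE) // redinv //.
have key : cong vE (x ^+ e') (u * w%:A).
  apply: (red_inj (hv:=hvE) (hs:=hsE) (vgeX hvE e' hx) hc0).
  rewrite h1 h2 -ea -!exprVn -!exprM.
  have -> : (d * km)%N = (kn * e' + 1)%N by rewrite mulnC hB.
  by rewrite exprD expr1 mulrCA mulfV ?mulr1 // invr_eq0.
have [N eN] : exists N, e' = N.+1 by exists e'.-1; rewrite prednK.
have [b hb] : exists b : E, b ^+ e' = u * w%:A.
  rewrite eN; apply: (@hensel E vE hvE hcE N (u * w%:A) x) => //.
    by rewrite -eN.
  by have := key; rewrite /cong eN.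
exists (pik * w), (g * b); split.
- by rewrite mulf_neq0 //; case: (unitvP uw).
- have [w0' vw] := unitvP uw.
  by rewrite (vM hvk) // vw vpik addr0.
rewrite exprMn hb algM /u; field => //.
Qed.
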